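(* Consider a generalized linear model with data $\mathcal{D}=(X,\mathbf{y})$, $X\in\mathbb{R}^{n\times(p+1)}$ whose first column is the intercept column of ones, whose next $m$ columns are mandatory predictors, and whose remaining $p-m$ columns form the matrix $X_u\in\mathbb{R}^{n\times(p-m)}$. Suppose the log-likelihood depends on $(\beta_0,\boldsymbol{\beta})$ only through the linear predictor $\eta=\eta_0(\beta_0,\boldsymbol{\beta})+X_u\boldsymbol{\beta}_u\in\mathbb{R}^n$, where $\boldsymbol{\beta}_u\in\mathbb{R}^{p-m}$ are the non-mandatory coefficients and $\eta_0$ collects the intercept and mandatory contributions; write $-\frac1n\ell$ as a twice differentiable function of $\eta$ and let $H_\eta(\eta)=\nabla^2_{\eta\eta}\bigl(-\tfrac1n\ell\bigr)(\eta)$. Fix $\lambda\ge0$ and $\delta>0$. For $\mathbf{t}\in[0,1]^{p-m}$ let $T_{\mathbf{t}}=\mathrm{diag}(1,\dots,1,t_1,\dots,t_{p-m})$ (with $m$ leading ones), $\Gamma_{\mathbf{t}}=\sqrt{I-T_{\mathbf{t}}^2}$, $$h_{\delta,\lambda}(\mathbf{t},\beta_0,\boldsymbol{\beta})=-\tfrac1n\ell(\beta_0,T_{\mathbf{t}}\boldsymbol{\beta};\mathcal{D})+\lambda\|\boldsymbol{\beta}\|_2^2+\delta\|\Gamma_{\mathbf{t}}\boldsymbol{\beta}\|_2^2,\qquad f_{\delta,\lambda}(\mathbf{t})=\inf_{\beta_0,\boldsymbol{\beta}}h_{\delta,\lambda}(\mathbf{t},\beta_0,\boldsymbol{\beta}).$$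 Let $\mathcal{T}_k=\{\mathbf{t}\in[0,1]^{p-m}:\mathbf{1}^\top\mathbf{t}=k\}$ and $\mathcal{S}_k=\{\mathbf{s}\in\{0,1\}^{p-m}:\mathbf{1}^\top\mathbf{s}=k\}$. Assume $X_u^\top H_\eta(\eta)X_u\preceq 2\delta I$ for all $\eta$. Then for every fixed $(\beta_0,\boldsymbol{\beta})$ the map $\mathbf{t}\mapsto h_{\delta,\lambda}(\mathbf{t},\beta_0,\boldsymbol{\beta})$ is concave on $(0,1)^{p-m}$. Consequently $f_{\delta,\lambda}$ is concave on $(0,1)^{p-m}$ (and extends concavely to $\mathcal{T}_k$), so a minimizer of $\min_{\mathbf{t}\in\mathcal{T}_k}f_{\delta,\lambda}(\mathbf{t})$ can be chosen at a corner $\mathbf{s}\in\mathcal{S}_k$.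
   Context: $\preceq$ denotes the Loewner (positive semidefinite) order. $\ell$ is the GLM log-likelihood; $T_{\mathbf{t}}\boldsymbol{\beta}=(\beta_1,\dots,\beta_m,t_1\beta_{m+1},\dots,t_{p-m}\beta_p)$, so the linear predictor at $(\beta_0,T_{\mathbf{t}}\boldsymbol{\beta})$ is $\eta_0(\beta_0,\boldsymbol{\beta})+X_u(\mathbf{t}\odot\boldsymbol{\beta}_u)$, with $\odot$ the elementwise product. *)

(* Defs.v *)
From HB Require Import structures.
From mathcomp Require Import all_boot all_order all_algebra.
From mathcomp Require Import all_classical all_reals all_analysis.
Set Implicit Arguments. Unset Strict Implicit. Unset Printing Implicit Defensive.
Import Order.TTheory GRing.Theory Num.Theory.
Import numFieldNormedType.Exports.
Local Open Scope classical_set_scope.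
Local Open Scope ring_scope.

Section Defs.
Variable R : realType.

Definition ebasis (n : nat) (i : 'I_n) : 'cV[R]_n := delta_mx i 0.

Definition grad_comp (n : nat) (L : 'cV[R]_n -> R) (i : 'I_n) : 'cV[R]_n -> R :=
  fun eta => 'D_(ebasis i) L eta.

Definition hessian (n : nat) (L : 'cV[R]_n -> R) (eta : 'cV[R]_n) : 'M[R]_n :=
  \matrix_(i, j) 'D_(ebasis j) (grad_comp L i) eta.

Definition twice_differentiable (n : nat) (L : 'cV[R]_n -> R) : Prop :=
  (forall eta, differentiable L eta) /\
  (forall i eta, differentiable (grad_comp L i) eta).

Definition psd (n : nat) (A : 'M[R]_n) : Prop :=
  forall v : 'cV[R]_n, 0 <= (v^T *m A *m v) 0 0.
Definition loewner_le (n : nat) (A B : 'M[R]_n) : Prop := psd (B - A).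

Definition sqnorm (n : nat) (v : 'cV[R]_n) : R := \sum_i (v i 0) ^+ 2.

Definition Tdiag (m q : nat) (t : 'cV[R]_q) : 'rV[R]_(m + q) :=
  row_mx (const_mx 1) t^T.
Definition Tmat (m q : nat) (t : 'cV[R]_q) : 'M[R]_(m + q) := diag_mx (Tdiag m t).
Definition Gammat (m q : nat) (t : 'cV[R]_q) : 'M[R]_(m + q) :=
  diag_mx (\row_i Num.sqrt (1 - (Tdiag m t 0 i) ^+ 2)).

(* linear predictor: intercept column of ones, then X = [X_m | X_u] *)
Definition linpred (n m q : nat) (X : 'M[R]_(n, m + q)) (b0 : R)
  (b : 'cV[R]_(m + q)) : 'cV[R]_n := b0 *: const_mx 1 + X *m b.

(* h_{delta,lambda}(t, b0, b); L eta = -(1/n) loglik as a function of eta *)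
Definition hfun (n m q : nat) (L : 'cV[R]_n -> R) (X : 'M[R]_(n, m + q))
  (lam delta : R) (t : 'cV[R]_q) (b0 : R) (b : 'cV[R]_(m + q)) : R :=
  L (linpred X b0 (Tmat m t *m b)) + lam * sqnorm b
  + delta * sqnorm (Gammat m t *m b).

Definition ffun (n m q : nat) (L : 'cV[R]_n -> R) (X : 'M[R]_(n, m + q))
  (lam delta : R) (t : 'cV[R]_q) : \bar R :=
  ereal_inf (range (fun bb : R * 'cV[R]_(m + q) =>
                      (hfun L X lam delta t bb.1 bb.2)%:E)).

Definition open_cube (q : nat) : set 'cV[R]_q :=
  [set t | forall j, 0 < t j 0 < 1].
Definition Tk (q k : nat) : set 'cV[R]_q :=
  [set t | (forall j, 0 <= t j 0 <= 1) /\ \sum_j t j 0 = k%:R].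
Definition Sk (q k : nat) : set 'cV[R]_q :=
  [set s | (forall j, s j 0 = 0 \/ s j 0 = 1) /\ \sum_j s j 0 = k%:R].

Definition concave_on (q : nat) (S : set 'cV[R]_q) (g : 'cV[R]_q -> R) : Prop :=
  forall x y a, S x -> S y -> 0 <= a <= 1 ->
    (1 - a) * g x + a * g y <= g ((1 - a) *: x + a *: y).
Definition econcave_on (q : nat) (S : set 'cV[R]_q) (g : 'cV[R]_q -> \bar R)
  : Prop :=
  forall x y (a : R), S x -> S y -> 0 <= a <= 1 ->
    ((1 - a)%:E * g x + a%:E * g y <= g ((1 - a) *: x + a *: y)%R)%E.

End Defs.

(* Main.v *)
Require Import Defs.
From HB Require Import structures.
From mathcomp Require Import all_boot all_order all_algebra.
From mathcomp Require Import all_classical all_reals all_analysis.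
From mathcomp Require Import ring lra.
Import Order.TTheory GRing.Theory Num.Theory.
Import numFieldNormedType.Exports.
Local Open Scope ring_scope.

Set Implicit Arguments. Unset Strict Implicit. Unset Printing Implicit Defensive.

Section V.
Variables (R : realType) (q : nat).

Definition ind (A : {set 'I_q}) : 'cV[R]_q := \col_j (if j \in A then 1 else 0).
Definition frac (t : 'cV[R]_q) : {set 'I_q} := [set j | 0 < t j 0 < 1].

Lemma sum_indT (A : {set 'I_q}) : \sum_j (if j \in A then 1 else 0 : R) = #|A|%:R.
Proof. by rewrite -big_mkcond sumr_const. Qed.

Lemma sum_ind (P Q : pred 'I_q) :
  \sum_(j | P j) (if Q j then 1 else 0 : R) = #|[set j | P j && Q j]|%:R.
Proof. by rewrite -big_mkcondr (eq_bigr (fun _ => (1%N)%:R)) // -natr_sum sum1dep_card. Qed.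

Lemma ind_Sk (A : {set 'I_q}) k : #|A| = k -> Sk k (ind A).
Proof.
move=> cA; split.
  by move=> j; rewrite mxE; case: (j \in A); [right|left].
by rewrite -cA -sum_indT; apply: eq_bigr => j _; rewrite mxE.
Qed.

Lemma zero_one (x : R) : 0 <= x <= 1 -> ~~ (0 < x < 1) -> x = 0 \/ x = 1.
Proof.
move=> /andP[h0 h1]; rewrite negb_and -!leNgt => /orP[h|h]; [left|right]; lra.
Qed.

Lemma base_case k t : Tk k t -> frac t = finset.set0 -> exists A : {set 'I_q}, #|A| = k /\ t = ind A.
Proof.
move=> [Hb Hs] F.
have H01 : forall j, t j 0 = 0 \/ t j 0 = 1.
  move=> j; apply: zero_one; first exact: Hb.
  by have := congr1 (fun S : {set 'I_q} => j \in S) F; rewrite /= !inE => ->.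
set A := [set j | t j 0 == 1].
have E : t = ind A.
  apply/matrixP => i j; rewrite (ord1 j) !mxE inE.
  by case: (H01 i) => ->; rewrite ?eqxx // eq_sym oner_eq0.
exists A; split => //.
apply/eqP; rewrite -(eqr_nat R) -sum_indT -Hs E; apply/eqP.
by apply: eq_bigr => j _; rewrite mxE.
Qed.

Lemma two_frac k t i : Tk k t -> i \in frac t -> exists2 j, j != i & j \in frac t.
Proof.
move=> [Hb Hs] Hi.
case: (boolP [exists j, (j != i) && (j \in frac t)]).
  by case/existsP => j /andP[]; exists j.
move/existsPn => H; exfalso.
have Hi' := Hi; rewrite inE in Hi'; case/andP: Hi' => ti0 ti1.
have E : \sum_(j | j != i) t j 0 = \sum_(j | j != i) (if t j 0 == 1 then 1 else 0 : R).
  apply: eq_bigr => j ji; have := H j; rewrite ji /= inE => Hj.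
  by case: (zero_one (Hb j) Hj) => ->; rewrite ?eqxx // eq_sym oner_eq0.
move: Hs; rewrite (bigD1 i) //= E sum_ind.
set c := #|_| => Hs.
case: (leqP k c) => kc.
  have : (k%:R : R) <= c%:R by rewrite ler_nat.
  lra.
have : ((c + 1)%:R : R) <= k%:R by rewrite ler_nat addn1.
rewrite natrD; lra.
Qed.

Definition Dv (i j : 'I_q) : 'cV[R]_q := \col_l ((l == i)%:R - (l == j)%:R).
Definition sp (t : 'cV[R]_q) (i j : 'I_q) : R :=
  if 1 - t i 0 <= t j 0 then 1 - t i 0 else t j 0.

Lemma sum_delta (i : 'I_q) : \sum_l ((l == i)%:R : R) = 1.
Proof. by rewrite (bigD1 i) //= eqxx big1 ?addr0 // => l /negbTE ->. Qed.

Lemma move_step k t i j : Tk k t -> i \in frac t -> j \in frac t -> i != j ->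
  Tk k (t + sp t i j *: Dv i j) /\ frac (t + sp t i j *: Dv i j) \proper frac t
  /\ 0 < sp t i j.
Proof.
move=> [Hb Hs] Hi Hj ij.
have Hi' := Hi; have Hj' := Hj; rewrite inE in Hi' Hj'.
case/andP: Hi' => ti0 ti1; rewrite inE in Hj'; case/andP: Hj' => tj0 tj1.
set s := sp t i j.
have s0 : 0 < s by rewrite /s /sp; case: ifP => _; lra.
have si : s <= 1 - t i 0 by rewrite /s /sp; case: ifPn => h; rewrite ?lexx //; rewrite -ltNge in h; lra.
have sj : s <= t j 0 by rewrite /s /sp; case: ifPn => h; rewrite ?lexx //.
have E : forall l, (t + s *: Dv i j) l 0 = t l 0 + s * ((l == i)%:R - (l == j)%:R).
  by move=> l; rewrite !mxE.
have ji : (j == i) = false by apply/negbTE; rewrite eq_sym.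
split; [split|split].
- move=> l; rewrite E.
  case: (eqVneq l i) => [->|li].
    by rewrite (negbTE ij) /=; apply/andP; split; lra.
  case: (eqVneq l j) => [->|lj].
    by rewrite /=; apply/andP; split; lra.
  by rewrite /= subrr mulr0 addr0; exact: Hb.
- rewrite (eq_bigr _ (fun l _ => E l)) big_split /= -mulr_sumr sumrB !sum_delta.
  by rewrite subrr mulr0 addr0.
- apply/properP; split.
    apply/fintype.subsetP => l; rewrite !inE E.
    case: (eqVneq l i) => [->|li]; first by rewrite inE in Hi; rewrite Hi.
    case: (eqVneq l j) => [->|lj]; first by rewrite inE in Hj; rewrite Hj.
    by rewrite /= subrr mulr0 addr0.
  case: (boolP (1 - t i 0 <= t j 0)) => h.
    have sv : s = 1 - t i 0 by rewrite /s /sp h.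
    exists i => //; rewrite inE E eqxx (negbTE ij) /= negb_and; apply/orP; right.
    by rewrite -leNgt sv; lra.
  have sv : s = t j 0 by rewrite /s /sp (negbTE h).
  exists j => //; rewrite inE E eqxx ji /= negb_and; apply/orP; left.
  by rewrite -leNgt sv; lra.
- exact: s0.
Qed.

Lemma conv_ge (e x y : \bar R) (a : R) : 0 <= a <= 1 -> (e <= x)%E -> (e <= y)%E ->
  (e <= (1 - a)%:E * x + a%:E * y)%E.
Proof.
case/andP => a0 a1 ex ey.
have a0' : 0 <= 1 - a by rewrite subr_ge0.
apply: (@le_trans _ _ ((1 - a)%:E * e + a%:E * e)%E).
  by rewrite -ge0_muleDl ?lee_fin // -EFinD subrK mul1e.
by apply: leeD; apply: lee_wpmul2l => //; rewrite lee_fin.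
Qed.

Variable f : 'cV[R]_q -> \bar R.
Variable k : nat.
Hypothesis fconc : econcave_on (@Tk R q k) f.

Lemma vertex_ind N : forall t, Tk k t -> (#|frac t| <= N)%N ->
  exists A : {set 'I_q}, #|A| = k /\ (f (ind A) <= f t)%E.
Proof.
elim: N => [|N IH] t Tt Hc.
  have F : frac t = finset.set0 by apply: cards0_eq; apply/eqP; rewrite -leqn0.
  by have [A [cA ->]] := base_case Tt F; exists A.
case: (eqVneq (frac t) finset.set0) => [F|F].
  by have [A [cA ->]] := base_case Tt F; exists A.
case/set0Pn: F => i Hi.
have [j ji Hj] := two_frac Tt Hi.
have ij : i != j by rewrite eq_sym.
have [T1 [P1 s1]] := move_step Tt Hi Hj ij.
have [T2 [P2 s2]] := move_step Tt Hj Hi ji.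
set t1 := t + sp t i j *: Dv i j in T1 P1.
set t2 := t + sp t j i *: Dv j i in T2 P2.
have [A1 [cA1 H1]] : exists A : {set 'I_q}, #|A| = k /\ (f (ind A) <= f t1)%E.
  by apply: IH => //; rewrite -ltnS; apply: leq_trans (proper_card P1) Hc.
have [A2 [cA2 H2]] : exists A : {set 'I_q}, #|A| = k /\ (f (ind A) <= f t2)%E.
  by apply: IH => //; rewrite -ltnS; apply: leq_trans (proper_card P2) Hc.
set a := sp t j i / (sp t i j + sp t j i).
have ss : 0 < sp t i j + sp t j i by rewrite addr_gt0.
have a01 : 0 <= a <= 1.
  apply/andP; split; first by rewrite divr_ge0 // ltW.
  by rewrite ler_pdivrMr // mul1r lerDr ltW.
have Et : (1 - a) *: t2 + a *: t1 = t.
  apply/matrixP => l c; rewrite !mxE /a; field.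
  by rewrite gt_eqF.
have Hc' := fconc T2 T1 a01; rewrite Et in Hc'.
case: (leP (f (ind A1)) (f (ind A2))) => h.
  exists A1; split => //; apply: le_trans Hc'.
  by apply: conv_ge => //; apply: le_trans H2.
exists A2; split => //; apply: le_trans Hc'.
by apply: conv_ge => //; apply: le_trans H1; apply: ltW.
Qed.

Lemma vertex_min : (k <= q)%N ->
  exists2 s, Sk k s & forall t, Tk k t -> (f s <= f t)%E.
Proof.
move=> kq.
have [A0 cA0] : exists A0 : {set 'I_q}, #|A0| = k.
  exists [set widen_ord kq x | x in 'I_k].
  rewrite card_imset ?card_ord //.
  by move=> x y H; apply: val_inj; exact: (congr1 val H).
have := @arg_minP _ _ _ A0 (fun A : {set 'I_q} => #|A| == k) (fun A => f (ind A)).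
case; first by apply/eqP.
move=> Am /eqP cAm Hm.
exists (ind Am); first exact: ind_Sk.
move=> t Tt.
have [A [cA HA]] := @vertex_ind #|frac t| t Tt (leqnn _).
by apply: le_trans HA; apply: Hm; apply/eqP.
Qed.

End V.

Unset Implicit Arguments.
Local Open Scope classical_set_scope.
Local Open Scope ring_scope.

Section Calc.
Variable R : realType.
Variable n : nat.
Implicit Types (F : 'cV[R]_n -> R) (p w : 'cV[R]_n).

Lemma line_fun_eq F p w (s : R) :
  (fun h : R => h^-1 *: (((fun s0 : R => F (p + s0 *: w)) \o shift s) (h *: 1) - F (p + s *: w)))
  = (fun h : R => h^-1 *: ((F \o shift (p + s *: w)) (h *: w) - F (p + s *: w))).
Proof.
apply/funext => h /=. congr (_ *: (F _ - _)).
by rewrite scaler1 scalerDl addrCA addrA.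
Qed.

Lemma Dline F p w (s : R) :
  'D_1 (fun s0 : R => F (p + s0 *: w)) s = 'D_w F (p + s *: w).
Proof. by rewrite /derive /= line_fun_eq. Qed.

Lemma derivable_line F p w (s : R) :
  derivable F (p + s *: w) w -> derivable (fun s0 : R => F (p + s0 *: w)) s 1.
Proof. by rewrite /derivable /= line_fun_eq. Qed.

Lemma D_decomp F x w : differentiable F x ->
  'D_w F x = \sum_i w i 0 * 'D_(@ebasis R n i) F x.
Proof.
move=> dF; rewrite deriveE //.
rewrite {1}(matrix_sum_delta w) linear_sum /=.
apply: eq_bigr => i _; rewrite big_ord1 linearZ /= deriveE // /ebasis (ord1 ord0).
Qed.

End Calc.

Section Calc2.
Variable R : realType.
Variable n : nat.

Lemma sq_derive (c s : R) : is_derive s 1 (fun s : R => c * s ^+ 2) (c * (2 * s)).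
Proof.
have h : is_derive s (1:R) (fun s : R => s ^+ 2) (2 * s).
  apply: DeriveDef; last first.
    by have := exp_derive 2 s 1; simpl => ->; rewrite scaler1 expr1.
  exact: exprn_derivable.
have := is_deriveZ c h. by [].
Qed.

Lemma lin_derive (c s : R) : is_derive s 1 (fun s : R => c * (2 * s)) (c * 2).
Proof.
have h : is_derive s (1:R) (fun s : R => s) 1 by exact: is_derive_id.
have -> : (fun s : R => c * (2 * s)) = (c * 2) \*: (fun s : R => s).
  by apply/funext => x /=; rewrite mulrA.
apply: is_derive_eq (is_deriveZ (c * 2) h) _.
by rewrite [LHS]mulr1.
Qed.

Variable L : 'cV[R]_n -> R.
Hypothesis tdL : twice_differentiable L.
Variables (p w : 'cV[R]_n) (c : R).
Hypothesis Hhess : forall eta, (w^T *m hessian L eta *m w) 0 0 <= 2 * c.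

Let g := fun s : R => L (p + s *: w).
Let Dg := fun s : R => \sum_i w i 0 * grad_comp L i (p + s *: w).

Lemma g_derive (s : R) : is_derive s (1:R) g (Dg s).
Proof.
apply: DeriveDef.
  by apply: derivable_line; apply: diff_derivable; exact: tdL.1.
by rewrite /g Dline D_decomp //; exact: tdL.1.
Qed.

Let f := fun s : R => c * s ^+ 2 - g s.

Lemma f_derive (s : R) : is_derive s (1:R) f (c * (2 * s) - Dg s).
Proof. exact: (is_deriveB (sq_derive c s) (g_derive s)). Qed.

Lemma Df_eq : 'D_1 f = fun s => c * (2 * s) - Dg s.
Proof. by apply/funext => s; case: (f_derive s). Qed.

Let DDg := fun s : R => \sum_i w i 0 * 'D_w (grad_comp L i) (p + s *: w).

Lemma Dg_derive (s : R) : is_derive s (1:R) Dg (DDg s).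
Proof.
have -> : Dg = \sum_i (fun s => w i 0 * grad_comp L i (p + s *: w)).
  by rewrite fct_sumE.
rewrite /DDg.
apply: is_derive_sum => i.
have hi : is_derive s (1:R) (fun s => grad_comp L i (p + s *: w))
                   ('D_w (grad_comp L i) (p + s *: w)).
  apply: DeriveDef; last by rewrite Dline.
  by apply: derivable_line; apply: diff_derivable; exact: tdL.2.
exact: (is_deriveZ (w i 0) hi).
Qed.

Lemma DDf_eq (s : R) : 'D_1 ('D_1 f) s = c * 2 - DDg s.
Proof.
rewrite Df_eq.
have := is_deriveB (lin_derive c s) (Dg_derive s).
by case.
Qed.

Lemma DDg_hess (s : R) : DDg s = (w^T *m hessian L (p + s *: w) *m w) 0 0.
Proof.
rewrite /DDg mxE.
rewrite (eq_bigr (fun i => w i 0 * \sum_j w j 0 * 'D_(@ebasis R n j) (grad_comp L i) (p + s *: w))); last first.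
  by move=> i _; rewrite D_decomp //; exact: tdL.2.
under [RHS]eq_bigr => j _ do rewrite mxE mulr_suml.
rewrite exchange_big /=; apply: eq_bigr => i _.
rewrite mulr_sumr; apply: eq_bigr => j _.
by rewrite !mxE; ring.
Qed.

Lemma line_concave (a : R) : 0 <= a <= 1 ->
  (1 - a) * L p + a * (L (p + w) - c) <= L (p + a *: w) - c * a ^+ 2.
Proof.
case/andP => a0 a1.
have ge0 : 0 <= 1 - a by rewrite subr_ge0.
have le1 : 1 - a <= 1 by rewrite lerBlDr lerDl.
have fc : forall x : R, {for x, continuous f}.
  move=> x; apply: differentiable_continuous; apply/derivable1_diffP.
  by case: (f_derive x).
have h1 : forall x : R, 0 < x < 1 -> 0 <= 'D_1 ('D_1 f) x.
  move=> x _; rewrite DDf_eq DDg_hess subr_ge0 mulrC.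
  exact: Hhess.
have h2 : f x @[x --> (1:R)^'-] --> f 1 := cvg_at_left_filter (fc 1).
have h3 : f x @[x --> (0:R)^'+] --> f 0 := cvg_at_right_filter (fc 0).
have h4 : {in `]0, 1[, forall x : R, derivable f x 1}.
  by move=> x _; case: (f_derive x).
have h5 : {in `]0, 1[, forall x : R, derivable ('D_1 f) x 1}.
  move=> x _; rewrite Df_eq.
  by case: (is_deriveB (lin_derive c x) (Dg_derive x)).
have := @second_derivative_convex R f 0 1 h1 h2 h3 h4 h5 (Itv01 ge0 le1) ler01.
rewrite !convRE /=.
have -> : (1 - a) * 0 + unstable.onem (1 - a) * 1 = a.
  by rewrite /unstable.onem; ring.
rewrite /unstable.onem /f /g scale0r addr0 scale1r.
have -> : (1 - (1 - a)) = a by ring.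
rewrite expr0n /= mulr0 expr1n mulr1 => H.
rewrite -lerN2.
lra.
Qed.

End Calc2.

Set Implicit Arguments. Unset Strict Implicit. Unset Printing Implicit Defensive.

Section H.
Variables (R : realType) (n m q : nat).

Definition ccube (t : 'cV[R]_q) := forall j, 0 <= t j 0 <= 1.

Lemma Tdiag_bnd t : ccube t -> forall i, 0 <= Tdiag m t 0 i <= 1.
Proof.
move=> Ht i; rewrite /Tdiag -[i]splitK; case: (fintype.split i) => k /=.
  by rewrite row_mxEl mxE ler01 lexx.
by rewrite row_mxEr mxE; exact: Ht.
Qed.

Lemma sqnorm_Gamma t (b : 'cV[R]_(m + q)) : ccube t ->
  sqnorm (Gammat m t *m b) = \sum_i (1 - Tdiag m t 0 i ^+ 2) * b i 0 ^+ 2.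
Proof.
move=> Ht; rewrite /sqnorm /Gammat mul_diag_mx; apply: eq_bigr => i _.
rewrite 2!mxE exprMn sqr_sqrtr //.
have /andP[h0 h1] := Tdiag_bnd Ht i; nra.
Qed.

Lemma Tdiag_lin (x d : 'cV[R]_q) (s : R) :
  Tdiag m (x + s *: d) = Tdiag m x + s *: row_mx 0 d^T.
Proof.
by rewrite /Tdiag scale_row_mx add_row_mx scaler0 addr0 linearD linearZ.
Qed.

Lemma Tmat_mul t (b : 'cV[R]_(m + q)) :
  Tmat m t *m b = \col_i (Tdiag m t 0 i * b i 0).
Proof.
by rewrite /Tmat mul_diag_mx; apply/matrixP => i j; rewrite !mxE (ord1 j).
Qed.

Variables (L : 'cV[R]_n -> R) (X : 'M[R]_(n, m + q)) (b0 : R) (b : 'cV[R]_(m + q)).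

Definition etaf (t : 'cV[R]_q) := linpred X b0 (Tmat m t *m b).
Definition Ddir (d : 'cV[R]_q) : 'rV[R]_(m + q) := locked (row_mx (0 : 'rV[R]_m) d^T).
Lemma DdirE d : Ddir d = row_mx 0 d^T. Proof. by rewrite /Ddir -lock. Qed.
Lemma Ddir_l d j : Ddir d 0 (lshift q j) = 0.
Proof. by rewrite DdirE row_mxEl mxE. Qed.
Lemma Ddir_r d j : Ddir d 0 (rshift m j) = d j 0.
Proof. by rewrite DdirE row_mxEr mxE. Qed.
Definition wdir (d : 'cV[R]_q) : 'cV[R]_n := X *m \col_i (Ddir d 0 i * b i 0).
Definition vdir (d : 'cV[R]_q) : 'cV[R]_q := \col_j (d j 0 * b (rshift m j) 0).

Lemma etaf_lin x d (s : R) : etaf (x + s *: d) = etaf x + s *: wdir d.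
Proof.
rewrite /etaf /wdir /linpred !Tmat_mul Tdiag_lin -DdirE.
have -> : \col_i ((Tdiag m x + s *: Ddir d) 0 i * b i 0) =
   \col_i (Tdiag m x 0 i * b i 0) + s *: \col_i (Ddir d 0 i * b i 0).
  by apply/matrixP => i j; rewrite !mxE; ring.
by rewrite mulmxDr -scalemxAr addrA.
Qed.

Lemma wdir_eq d : wdir d = rsubmx X *m vdir d.
Proof.
apply/matrixP => k l; rewrite !mxE big_split_ord /=.
rewrite big1 ?add0r; last by move=> j _; rewrite !mxE Ddir_l; ring.
by apply: eq_bigr => j _; rewrite !mxE Ddir_r.
Qed.

Lemma V_eq d : \sum_i (Ddir d 0 i) ^+ 2 * b i 0 ^+ 2 = \sum_j (vdir d j 0) ^+ 2.
Proof.
rewrite big_split_ord /= big1 ?add0r.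
  by apply: eq_bigr => j _; rewrite !mxE Ddir_r; ring.
by move=> j _; rewrite Ddir_l; ring.
Qed.

Lemma hess_bound (delta : R) :
  (forall eta, loewner_le ((rsubmx X)^T *m hessian L eta *m rsubmx X) ((2 * delta)%:M)) ->
  forall d eta, ((wdir d)^T *m hessian L eta *m wdir d) 0 0 <=
                2 * (delta * \sum_j (vdir d j 0) ^+ 2).
Proof.
move=> Hl d eta.
have -> : ((wdir d)^T *m hessian L eta *m wdir d) =
   (vdir d)^T *m ((rsubmx X)^T *m hessian L eta *m rsubmx X) *m vdir d.
  by rewrite wdir_eq trmx_mul !mulmxA.
set A := (_ *m _ *m rsubmx X); set v := vdir d.
have := Hl eta v; rewrite /psd mulmxBr mulmxBl mul_mx_scalar -scalemxAl.
rewrite [X in 0 <= X]mxE [X in 0 <= _ + X]mxE [X in 0 <= X + _]mxE subr_ge0 => H.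
have Ev : (v^T *m v) 0 0 = \sum_j v j 0 ^+ 2.
  by rewrite mxE; apply: eq_bigr => j _; rewrite !mxE expr2.
by rewrite Ev in H; rewrite mulrA.
Qed.

Lemma mxE_lin k (A B : 'rV[R]_k) (s : R) i : (A + s *: B) 0 i = A 0 i + s * B 0 i.
Proof. by rewrite !mxE. Qed.

Lemma ccube_conv x y (a : R) : ccube x -> ccube y -> 0 <= a <= 1 ->
  ccube ((1 - a) *: x + a *: y).
Proof.
move=> hx hy /andP[a0 a1] j; rewrite !mxE.
have /andP[x0 x1] := hx j; have /andP[y0 y1] := hy j.
apply/andP; split; nra.
Qed.

Lemma h_concave_cc (lam delta : R) :
  twice_differentiable L ->
  (forall eta, loewner_le ((rsubmx X)^T *m hessian L eta *m rsubmx X) ((2 * delta)%:M)) ->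
  forall x y (a : R), ccube x -> ccube y -> 0 <= a <= 1 ->
  (1 - a) * hfun L X lam delta x b0 b + a * hfun L X lam delta y b0 b
    <= hfun L X lam delta ((1 - a) *: x + a *: y) b0 b.
Proof.
move=> tdL Hl x y a cx cy a01.
have cz := ccube_conv cx cy a01.
set d := y - x.
have ey : y = x + 1 *: d by rewrite scale1r /d addrC subrK.
have ex : x = x + 0 *: d by rewrite scale0r addr0.
have ez : (1 - a) *: x + a *: y = x + a *: d.
  by apply/matrixP => i j; rewrite /d !mxE; ring.
set Q0 := \sum_i (1 - Tdiag m x 0 i ^+ 2) * b i 0 ^+ 2.
set Q1 := \sum_i 2 * (Tdiag m x 0 i * Ddir d 0 i) * b i 0 ^+ 2.
set V := \sum_i Ddir d 0 i ^+ 2 * b i 0 ^+ 2.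
have hform : forall s : R, ccube (x + s *: d) ->
  hfun L X lam delta (x + s *: d) b0 b =
  L (etaf x + s *: wdir d) + lam * sqnorm b + delta * (Q0 - s * Q1 - s ^+ 2 * V).
  move=> s cs; rewrite /hfun -/(etaf _) etaf_lin sqnorm_Gamma //.
  congr (_ + _ * _).
  rewrite /Q0 /Q1 /V mulr_sumr mulr_sumr -sumrB -sumrB; apply: eq_bigr => i _.
  rewrite Tdiag_lin -DdirE mxE_lin; ring.
rewrite ez; move: cz; rewrite ez => cz.
rewrite (hform a cz).
move: cx; rewrite ex => cx; rewrite (hform 0 cx).
move: cy; rewrite ey => cy; rewrite (hform 1 cy).
rewrite scale0r addr0 scale1r.
have hb := hess_bound Hl d; rewrite -V_eq in hb.
have H := @line_concave R n L tdL (etaf x) (wdir d) (delta * V) hb a a01.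
rewrite scale0r addr0 expr0n /= expr1n !mul0r !mul1r !subr0; nra.
Qed.

End H.

Unset Implicit Arguments.

Lemma inf_econcave (R : realType) (q : nat) (T : Type) (S : set 'cV[R]_q)
  (F : T -> 'cV[R]_q -> R) :
  (forall bb, concave_on S (F bb)) ->
  econcave_on S (fun t => ereal_inf (range (fun bb => (F bb t)%:E))).
Proof.
move=> Hc x y a Sx Sy a01; apply: le_ereal_inf_tmp => _ [bb _ <-].
have Hx : (ereal_inf (range (fun bb => (F bb x)%:E)) <= (F bb x)%:E)%E.
  by apply: ereal_inf_lbound; exists bb.
have Hy : (ereal_inf (range (fun bb => (F bb y)%:E)) <= (F bb y)%:E)%E.
  by apply: ereal_inf_lbound; exists bb.
case/andP: a01 => a0 a1.
have a0' : 0 <= 1 - a by rewrite subr_ge0.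
apply: (@le_trans _ _ ((1 - a)%:E * (F bb x)%:E + a%:E * (F bb y)%:E)%E).
  by apply: leeD; apply: lee_wpmul2l => //; rewrite lee_fin.
rewrite -!EFinM -EFinD lee_fin; apply: Hc => //; exact/andP.
Qed.

Theorem theorem1 (R : realType) (n m q : nat) (L : 'cV[R]_n -> R)
  (X : 'M[R]_(n, m + q)) (lam delta : R) :
  twice_differentiable L ->
  0 <= lam -> 0 < delta ->
  (forall eta : 'cV[R]_n,
     loewner_le ((rsubmx X)^T *m hessian L eta *m rsubmx X)
                ((2 * delta)%:M)) ->
  (forall (b0 : R) (b : 'cV[R]_(m + q)),
     concave_on (@open_cube R q) (fun t => hfun L X lam delta t b0 b)) /\
  econcave_on (@open_cube R q) (ffun L X lam delta) /\
  (forall k : nat, econcave_on (@Tk R q k) (ffun L X lam delta)) /\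
  (forall k : nat, (k <= q)%N ->
     exists2 s, @Sk R q k s &
       forall t, @Tk R q k t -> (ffun L X lam delta s <= ffun L X lam delta t)%E).
Proof.
move=> tdL lam0 delta0 Hl.
have Hcc : forall (S : set 'cV[R]_q), (forall t, S t -> ccube t) ->
   forall (b0 : R) (b : 'cV[R]_(m + q)),
     concave_on S (fun t => hfun L X lam delta t b0 b).
  move=> S HS b0 b x y a Sx Sy a01.
  exact: (h_concave_cc b0 b lam tdL Hl (HS _ Sx) (HS _ Sy) a01).
have Ho : forall t : 'cV[R]_q, @open_cube R q t -> ccube t.
  by move=> t Ht j; have /andP[h0 h1] := Ht j; rewrite ltW // ltW.
have HT : forall k (t : 'cV[R]_q), @Tk R q k t -> ccube t by move=> k t [].
have Hf : forall (S : set 'cV[R]_q), (forall t, S t -> ccube t) ->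
  econcave_on S (ffun L X lam delta).
  move=> S HS.
  exact: (@inf_econcave R q (R * 'cV[R]_(m + q))%type S
           (fun bb t => hfun L X lam delta t bb.1 bb.2) (fun bb => Hcc S HS bb.1 bb.2)).
split; first exact: Hcc.
split; first exact: Hf.
split; first by move=> k; apply: Hf; exact: HT.
move=> k kq; apply: vertex_min => //.
by apply: Hf; exact: HT.
Qed.
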